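(* Let $m,n\geq 1$ and let $\mathcal{B}$ be the $\mathbb{C}$-linear braided rigid monoidal category described in the context, with parameters $\alpha,\beta,\kappa,\kappa'\in\mathbb{C}$. In $\mathrm{End}_{\mathcal{B}}(V_{m,n})$, $V_{m,n}=(X^* )^{\otimes m}\otimes X^{\otimes n}$, define elements $J^{(n)}_1,\dots,J^{(n)}_{m+n}$ by $$J^{(n)}_1=1,\qquad J^{(n)}_i=(-\alpha\beta)^{-1}h_{n+1-i}\,J^{(n)}_{i-1}\,h_{n+1-i}\quad(2\leq i\leq n),$$ $$J^{(n)}_{n+1}=(-\alpha\beta)^{n}\,\mathrm{id}_{(X^* )^{\otimes(m-1)}}\otimes\bigl(c_{X^{\otimes n},X^*}\circ c_{X^*,X^{\otimes n}}\bigr)$$ (the double braiding of the black factor $1'$ with all $n$ white factors), and $$J^{(n)}_{n+j}=(-\alpha\beta)^{-1}g_{j-1}\,J^{(n)}_{n+j-1}\,g_{j-1}\quad(2\leq j\leq m).$$ Then every $J^{(n)}_j$, $j=2,\dots,m+n$, lies in the quantum walled Brauer algebra $\mathrm{qwB}_{m,n}$, i.e. in the subalgebra of $\mathrm{End}_{\mathcal{B}}(V_{m,n})$ generated by $g_1,\dots,g_{m-1}$, $E$, $h_1,\dots,h_{n-1}$.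
   Context: $\mathcal{B}$ is the $\mathbb{C}$-linear strict monoidal braided category whose objects are finite tensor words in two objects $X$ (''white'') and $X^*$ (''black''), with braiding $c_{A,B}:A\otimes B\to B\otimes A$, and with duality morphisms $\mathrm{ev}_{\bullet\circ}:X^*\otimes X\to\mathbf 1$, $\mathrm{ev}_{\circ\bullet}:X\otimes X^*\to\mathbf 1$, $\mathrm{coev}_{\bullet\circ}:\mathbf 1\to X^*\otimes X$, $\mathrm{coev}_{\circ\bullet}:\mathbf 1\to X\otimes X^*$ satisfying the zigzag identities (morphisms are linear combinations of tangles modulo isotopy), subject to the relations: $c_{X,X}^2=-\alpha\beta\,\mathrm{id}+(\alpha+\beta)c_{X,X}$; $c_{X,X^*}\circ\mathrm{coev}_{\circ\bullet}=\kappa\,\mathrm{coev}_{\bullet\circ}$; $c_{X^*,X}\circ\mathrm{coev}_{\bullet\circ}=\kappa'\,\mathrm{coev}_{\circ\bullet}$; $\mathrm{ev}_{\circ\bullet}\circ\mathrm{coev}_{\circ\bullet}=\frac{\theta+1}{\kappa'(\alpha+\beta)}$, $\mathrm{ev}_{\bullet\circ}\circ\mathrm{coev}_{\bullet\circ}=\frac{\theta+1}{\kappa(\alpha+\beta)}$, where $\theta=\alpha\beta\kappa\kappa'$. The tensor factors of $V_{m,n}=(X^* )^{\otimes m}\otimes X^{\otimes n}$ are labelled from left to right $m',\dots,2',1',1,2,\dots,n$ (numbered outward from the ''wall'' between black and white factors). Generators: $g_j$ ($1\le j\le m-1$) is $c_{X^*,X^*}$ acting on factors $(j+1)',j'$ tensored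 with identities; $h_i$ ($1\le i\le n-1$) is $c_{X,X}$ acting on factors $i,i+1$ tensored with identities; $E=\mathrm{id}_{(X^* )^{\otimes(m-1)}}\otimes(\mathrm{coev}_{\bullet\circ}\circ\mathrm{ev}_{\bullet\circ})\otimes\mathrm{id}_{X^{\otimes(n-1)}}$ acting on factors $1',1$. *)

(* Defs.v *)
From HB Require Import structures.
From mathcomp Require Import all_boot all_algebra.
From mathcomp Require Import complex.
From mathcomp Require Import Rstruct.

Set Implicit Arguments.
Unset Strict Implicit.
Unset Printing Implicit Defensive.

Import GRing.Theory.
Local Open Scope ring_scope.

Definition CC : fieldType := (Rdefinitions.R)[i].

(* Objects: finite tensor words in X (true, "white") and Xs (false, "black").
   The tensor product of objects is concatenation, the unit is [::]. *)
Definition ob := seq bool.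
Definition oX : ob := [:: true].
Definition oXs : ob := [:: false].

(* Transport of a morphism along equalities of objects (decided by eqType);
   it is only ever applied where the objects are equal, in which case it is
   the canonical identification (the junk value 0 is never reached). *)
Definition castH (H : ob -> ob -> lmodType CC) (A B : ob) (A' B' : ob)
    (f : H A B) : H A' B' :=
  match A =P A', B =P B' with
  | ReflectT e1, ReflectT e2 =>
      eq_rect B (fun Y => H A' Y) (eq_rect A (fun Z => H Z B) f A' e1) B' e2
  | _, _ => 0
  end.
Arguments castH {H A B} A' B' f.

Record brcat := BrCat {
  Hom : ob -> ob -> lmodType CC;
  cmp : forall A B D, Hom B D -> Hom A B -> Hom A D;
  idm : forall A, Hom A A;
  tns : forall A B A' B', Hom A B -> Hom A' B' -> Hom (A ++ A') (B ++ B');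
  brd : forall A B, Hom (A ++ B) (B ++ A);
  brdV : forall A B, Hom (B ++ A) (A ++ B);
  ev_bw : Hom [:: false; true] [::];
  ev_wb : Hom [:: true; false] [::];
  coev_bw : Hom [::] [:: false; true];
  coev_wb : Hom [::] [:: true; false];
  cmpA : forall A B D E (f : Hom D E) (g : Hom B D) (h : Hom A B),
    cmp (cmp f g) h = cmp f (cmp g h);
  cmp1l : forall A B (f : Hom A B), cmp (idm B) f = f;
  cmp1r : forall A B (f : Hom A B), cmp f (idm A) = f;
  cmp_linl : forall A B D (a : CC) (f g : Hom B D) (h : Hom A B),
    cmp (a *: f + g) h = a *: cmp f h + cmp g h;
  cmp_linr : forall A B D (a : CC) (h : Hom B D) (f g : Hom A B),
    cmp h (a *: f + g) = a *: cmp h f + cmp h g;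
  tns_linl : forall A B A' B' (a : CC) (f g : Hom A B) (h : Hom A' B'),
    tns (a *: f + g) h = a *: tns f h + tns g h;
  tns_linr : forall A B A' B' (a : CC) (h : Hom A B) (f g : Hom A' B'),
    tns h (a *: f + g) = a *: tns h f + tns h g;
  tns_cmp : forall A B D A' B' D' (f : Hom B D) (g : Hom A B)
      (f' : Hom B' D') (g' : Hom A' B'),
    tns (cmp f g) (cmp f' g') = cmp (tns f f') (tns g g');
  tns_id : forall A B, tns (idm A) (idm B) = idm (A ++ B);
  tnsA : forall A B A' B' A'' B'' (f : Hom A B) (g : Hom A' B') (h : Hom A'' B''),
    castH (A ++ (A' ++ A'')) (B ++ (B' ++ B'')) (tns (tns f g) h)
    = tns f (tns g h);
  tns1l : forall A B (f : Hom A B), tns (idm [::]) f = f;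
  tns1r : forall A B (f : Hom A B), castH A B (tns f (idm [::])) = f;
  brd_nat : forall A B A' B' (f : Hom A B) (g : Hom A' B'),
    cmp (brd B B') (tns f g) = cmp (tns g f) (brd A A');
  brdVK : forall A B, cmp (brdV A B) (brd A B) = idm (A ++ B);
  brdKV : forall A B, cmp (brd A B) (brdV A B) = idm (B ++ A);
  hex1 : forall A B D,
    castH (A ++ (B ++ D)) (D ++ (A ++ B)) (brd (A ++ B) D)
    = cmp (castH (A ++ (D ++ B)) (D ++ (A ++ B)) (tns (brd A D) (idm B)))
          (tns (idm A) (brd B D));
  hex2 : forall A B D,
    castH (A ++ (B ++ D)) (B ++ (D ++ A)) (brd A (B ++ D))
    = cmp (tns (idm B) (brd A D))
          (castH (A ++ (B ++ D)) (B ++ (A ++ D)) (tns (brd A B) (idm D)));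
  zz1 : cmp (tns (idm oX) ev_bw) (tns coev_wb (idm oX)) = idm oX;
  zz2 : cmp (tns ev_bw (idm oXs)) (tns (idm oXs) coev_wb) = idm oXs;
  zz3 : cmp (tns (idm oXs) ev_wb) (tns coev_bw (idm oXs)) = idm oXs;
  zz4 : cmp (tns ev_wb (idm oX)) (tns (idm oX) coev_bw) = idm oX
}.

Arguments cmp {b A B D}.
Arguments tns {b A B A' B'}.

Section Defs.
Variable B : brcat.
Variables alpha beta kappa kappa' : CC.

Definition theta := alpha * beta * kappa * kappa'.

Definition B_relations : Prop :=
  [/\ cmp (brd B oX oX) (brd B oX oX)
        = (- (alpha * beta)) *: idm B (oX ++ oX) + (alpha + beta) *: brd B oX oX,
      cmp (brd B oX oXs) (coev_wb B) = kappa *: coev_bw B,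
      cmp (brd B oXs oX) (coev_bw B) = kappa' *: coev_wb B,
      cmp (ev_wb B) (coev_wb B) = ((theta + 1) / (kappa' * (alpha + beta))) *: idm B [::]
    & cmp (ev_bw B) (coev_bw B) = ((theta + 1) / (kappa * (alpha + beta))) *: idm B [::] ].

Definition whisk (P Q : ob) A A' (f : Hom B A A') : Hom B (P ++ (A ++ Q)) (P ++ (A' ++ Q)) :=
  tns (idm B P) (tns f (idm B Q)).

Variables m n : nat.

(* V_{m,n} = (Xs)^{[x] m} [x] X^{[x] n}; factors m',...,1',1,...,n. *)
Definition Vmn : ob := nseq m false ++ nseq n true.

(* g_j : c_{Xs,Xs} on factors (j+1)', j'  (1 <= j <= m-1) *)
Definition gen_g (j : nat) : Hom B Vmn Vmn :=
  castH Vmn Vmn (whisk (nseq (m - j.+1) false) (nseq j.-1 false ++ nseq n true)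
                   (brd B oXs oXs)).

(* h_i : c_{X,X} on factors i, i+1  (1 <= i <= n-1) *)
Definition gen_h (i : nat) : Hom B Vmn Vmn :=
  castH Vmn Vmn (whisk (nseq m false ++ nseq i.-1 true) (nseq (n - i.+1) true)
                   (brd B oX oX)).

(* E : coev_{bullet circ} o ev_{bullet circ} on factors 1', 1 *)
Definition gen_E : Hom B Vmn Vmn :=
  castH Vmn Vmn (whisk (nseq m.-1 false) (nseq n.-1 true) (cmp (coev_bw B) (ev_bw B))).

Definition qwB_gens (f : Hom B Vmn Vmn) : Prop :=
  (exists2 j, (1 <= j <= m - 1)%N & f = gen_g j)
  \/ f = gen_E
  \/ (exists2 i, (1 <= i <= n - 1)%N & f = gen_h i).

Inductive in_subalg (S : Hom B Vmn Vmn -> Prop) : Hom B Vmn Vmn -> Prop :=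
| sub_gen f : S f -> in_subalg S f
| sub_one : in_subalg S (idm B Vmn)
| sub_add f g : in_subalg S f -> in_subalg S g -> in_subalg S (f + g)
| sub_scale (a : CC) f : in_subalg S f -> in_subalg S (a *: f)
| sub_mul f g : in_subalg S f -> in_subalg S g -> in_subalg S (cmp f g).

Definition J_wall : Hom B Vmn Vmn :=
  (- (alpha * beta)) ^+ n *:
    castH Vmn Vmn (whisk (nseq m.-1 false) [::]
      (cmp (brd B (nseq n true) oXs) (brd B oXs (nseq n true)))).

(* J^{(n)}_i for i >= 1 (the value at index 0, never used, is 0). *)
Fixpoint J (i : nat) : Hom B Vmn Vmn :=
  match i with
  | 0 => 0
  | 1 => idm B Vmn
  | k.+1 =>
      if (k.+1 <= n)%N then
        (- (alpha * beta))^-1 *: cmp (gen_h (n - k)) (cmp (J k) (gen_h (n - k)))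
      else if k.+1 == n.+1 then J_wall
      else
        (- (alpha * beta))^-1 *: cmp (gen_g (k - n)) (cmp (J k) (gen_g (k - n)))
  end.

End Defs.
Arguments qwB_gens : clear implicits.

(* Main.v *)
Require Import Defs.
From HB Require Import structures.
From mathcomp Require Import all_boot all_algebra.
From mathcomp Require Import zify.
Set Implicit Arguments. Unset Strict Implicit. Unset Printing Implicit Defensive.
Import GRing.Theory.
Local Open Scope ring_scope.

Section Cast.
Variable B : brcat.
Local Notation HH := (Defs.Hom B).

Lemma castH_id A C (f : HH A C) : castH A C f = f.
Proof.
rewrite /castH; case: eqP => // e1; case: eqP => // e2.
by rewrite (eq_irrelevance e1 erefl) (eq_irrelevance e2 erefl).
Qed.

Definition heq A C A' C' (f : HH A C) (g : HH A' C') :=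
  A = A' /\ C = C' /\ castH A' C' f = g.

Lemma heq_refl A C (f : HH A C) : heq f f.
Proof. by split=> //; split=> //; rewrite castH_id. Qed.

Lemma heq_sym A C A' C' (f : HH A C) (g : HH A' C') : heq f g -> heq g f.
Proof. case=> e1 [e2]; subst; rewrite castH_id => ->; exact: heq_refl. Qed.

Lemma heq_trans A C A' C' A'' C'' (f : HH A C) (g : HH A' C') (h : HH A'' C'') :
  heq f g -> heq g h -> heq f h.
Proof. case=> e1 [e2]; subst; rewrite castH_id => ->; done. Qed.

Lemma heq_eq A C (f g : HH A C) : heq f g -> f = g.
Proof. by case=> _ [_]; rewrite castH_id. Qed.

Lemma castH_heq A C A' C' (f : HH A C) : A = A' -> C = C' -> heq (castH A' C' f) f.
Proof. move=> e1 e2; subst; rewrite castH_id; exact: heq_refl. Qed.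

Lemma heq_castH A C A' C' (f : HH A C) (g : HH A' C') X Y :
  heq f g -> castH X Y f = castH X Y g.
Proof. by case=> e1 [e2]; subst; rewrite castH_id => ->. Qed.

Lemma heq_cmp A C D A' C' D' (f : HH C D) (g : HH A C) (f' : HH C' D') (g' : HH A' C') :
  heq f f' -> heq g g' -> heq (cmp f g) (cmp f' g').
Proof.
case=> e1 [e2]; subst; rewrite castH_id => ->.
case=> e1 [e2]; subst; rewrite castH_id => ->; exact: heq_refl.
Qed.

Lemma heq_tns A C D E A' C' D' E' (f : HH A C) (g : HH D E) (f' : HH A' C') (g' : HH D' E') :
  heq f f' -> heq g g' -> heq (tns f g) (tns f' g').
Proof.
case=> e1 [e2]; subst; rewrite castH_id => ->.
case=> e1 [e2]; subst; rewrite castH_id => ->; exact: heq_refl.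
Qed.

Lemma heq_idm A A' : A = A' -> heq (idm B A) (idm B A').
Proof. move=> e; subst; exact: heq_refl. Qed.

Lemma heq_brd A C A' C' : A = A' -> C = C' -> heq (brd B A C) (brd B A' C').
Proof. move=> e1 e2; subst; exact: heq_refl. Qed.

Lemma heq_tnsA A C A' C' A'' C'' (f : HH A C) (g : HH A' C') (h : HH A'' C'') :
  heq (tns (tns f g) h) (tns f (tns g h)).
Proof. by split; [|split]; rewrite ?catA // tnsA. Qed.

Lemma heq_tns1r A C (f : HH A C) : heq (tns f (idm B [::])) f.
Proof. by split; [|split]; rewrite ?cats0 // tns1r. Qed.

Lemma castH_lin A C X Y (a : CC) (f g : HH A C) :
  castH X Y (a *: f + g) = a *: castH X Y f + castH X Y g.
Proof.
rewrite /castH; case: (A =P X) => [e1|_]; case: (C =P Y) => [e2|_] /=;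
  try by rewrite scaler0 addr0.
by subst.
Qed.

End Cast.


Section Cat.
Variable B : brcat.

Lemma tns1r' A C (f : Defs.Hom B A C) : tns f (idm B [::]) = castH _ _ f.
Proof. apply/esym/heq_eq/(heq_trans (f := castH _ _ f) (g := f)).
  by apply: castH_heq; rewrite cats0.
exact/heq_sym/heq_tns1r. Qed.

Lemma brd_nil_l : brd B [::] oX = idm B oX.
Proof.
have h := hex1 B [::] [::] oX.
rewrite !castH_id tns1l tns1r' castH_id in h.
have k := brdVK B [::] oX.
by rewrite -k {2}h -cmpA k cmp1l.
Qed.

Lemma brd_nil_r : brd B oX [::] = idm B oX.
Proof.
have h := hex2 B oX [::] [::].
rewrite !castH_id tns1l tns1r' castH_id in h.
have k := brdVK B oX [::].
by rewrite -k {2}h -cmpA k cmp1l.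
Qed.
End Cat.


Section Lin.
Variable B : brcat.
Implicit Types A C D E : ob.

Lemma cmpDl A C D (f g : Defs.Hom B C D) (h : Defs.Hom B A C) : cmp (f + g) h = cmp f h + cmp g h.
Proof. by have := cmp_linl 1 f g h; rewrite !scale1r. Qed.
Lemma cmp0l A C D (h : Defs.Hom B A C) : cmp (0 : Defs.Hom B C D) h = 0.
Proof. by have := cmp_linl (-1) (0 : Defs.Hom B C D) 0 h; rewrite !scaleN1r !addNr. Qed.
Lemma cmpZl A C D a (f : Defs.Hom B C D) (h : Defs.Hom B A C) : cmp (a *: f) h = a *: cmp f h.
Proof. by have := cmp_linl a f 0 h; rewrite !addr0 cmp0l addr0. Qed.
Lemma cmpDr A C D (f g : Defs.Hom B A C) (h : Defs.Hom B C D) : cmp h (f + g) = cmp h f + cmp h g.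
Proof. by have := cmp_linr 1 h f g; rewrite !scale1r. Qed.
Lemma cmp0r A C D (h : Defs.Hom B C D) : cmp h (0 : Defs.Hom B A C) = 0.
Proof. by have := cmp_linr (-1) h (0 : Defs.Hom B A C) 0; rewrite !scaleN1r !addNr. Qed.
Lemma cmpZr A C D a (f : Defs.Hom B A C) (h : Defs.Hom B C D) : cmp h (a *: f) = a *: cmp h f.
Proof. by have := cmp_linr a h f 0; rewrite !addr0 cmp0r addr0. Qed.

Lemma tnsDl A C D E (f g : Defs.Hom B A C) (h : Defs.Hom B D E) : tns (f + g) h = tns f h + tns g h.
Proof. by have := tns_linl 1 f g h; rewrite !scale1r. Qed.
Lemma tns0l A C D E (h : Defs.Hom B D E) : tns (0 : Defs.Hom B A C) h = 0.
Proof. by have := tns_linl (-1) (0 : Defs.Hom B A C) 0 h; rewrite !scaleN1r !addNr. Qed.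
Lemma tnsZl A C D E a (f : Defs.Hom B A C) (h : Defs.Hom B D E) : tns (a *: f) h = a *: tns f h.
Proof. by have := tns_linl a f 0 h; rewrite !addr0 tns0l addr0. Qed.
Lemma tnsDr A C D E (f g : Defs.Hom B A C) (h : Defs.Hom B D E) : tns h (f + g) = tns h f + tns h g.
Proof. by have := tns_linr 1 h f g; rewrite !scale1r. Qed.
Lemma tns0r A C D E (h : Defs.Hom B D E) : tns h (0 : Defs.Hom B A C) = 0.
Proof. by have := tns_linr (-1) h (0 : Defs.Hom B A C) 0; rewrite !scaleN1r !addNr. Qed.
Lemma tnsZr A C D E a (f : Defs.Hom B A C) (h : Defs.Hom B D E) : tns h (a *: f) = a *: tns h f.
Proof. by have := tns_linr a h f 0; rewrite !addr0 tns0r addr0. Qed.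

Lemma castHD A C X Y (f g : Defs.Hom B A C) : castH X Y (f + g) = castH X Y f + castH X Y g.
Proof. by have := castH_lin X Y 1 f g; rewrite !scale1r. Qed.
Lemma castHZ A C X Y a (f : Defs.Hom B A C) : castH X Y (a *: f) = a *: castH X Y f.
Proof. have := castH_lin X Y a f 0; rewrite !addr0 => ->.
by have := castH_lin X Y (-1) (0 : Defs.Hom B A C) 0; rewrite !scaleN1r !addNr => ->; rewrite addr0. Qed.

End Lin.


Section D1.
Variable B : brcat.
Variables (a s kappa : CC).
Hypothesis hc : cmp (brd B oX oX) (brd B oX oX) = a *: idm B (oX ++ oX) + s *: brd B oX oX.
Hypothesis hk : cmp (brd B oX oXs) (coev_wb B) = kappa *: coev_bw B.

Lemma D1_rel : a *: cmp (brd B oX oXs) (brd B oXs oX) + (s * kappa) *: cmp (coev_bw B) (ev_bw B)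
  = idm B [:: false; true].
Proof.
set c := brd B oX oX.
set u := cmp (tns (idm B oX) (brd B oXs oX)) (tns (coev_wb B) (idm B oX)).
set v := tns (idm B oX) (coev_wb B).
set w := tns (coev_wb B) (idm B oX).
have eqA : cmp (tns c (idm B oXs)) u = v.
  have h := hex1 B oX oXs oX; rewrite !castH_id in h.
  have k := brd_nat (coev_wb B) (idm B oX).
  by rewrite brd_nil_l cmp1r h cmpA in k.
have eq2 : cmp (tns c (idm B oXs)) v = a *: u + s *: v.
  rewrite -eqA -cmpA -tns_cmp cmp1l hc tnsDl !tnsZl tns_id cmpDl !cmpZl cmp1l eqA //.
set Q := tns (idm B oX) (brd B oX oXs).
have eqB : cmp Q (cmp (tns c (idm B oXs)) v) = w.
  have h := hex2 B oX oX oXs; rewrite !castH_id in h.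
  have k := brd_nat (idm B oX) (coev_wb B).
  by rewrite brd_nil_r cmp1r h cmpA in k.
rewrite eq2 cmpDr !cmpZr in eqB.
have eQu : cmp Q u = cmp (tns (idm B oX) (cmp (brd B oX oXs) (brd B oXs oX))) w.
  by rewrite /Q /u -cmpA -tns_cmp cmp1l.
have eQv : cmp Q v = kappa *: tns (idm B oX) (coev_bw B).
  by rewrite /Q /v -tns_cmp cmp1l hk tnsZr.
rewrite eQu eQv in eqB.
set D1 := cmp (brd B oX oXs) (brd B oXs oX) in eqB *.
set M := tns (ev_bw B) (idm B [:: false; true]).
have F : forall f g : Defs.Hom B oX [:: true; false; true], f = g ->
   cmp M (tns (idm B oXs) f) = cmp M (tns (idm B oXs) g) by move=> f g ->.
have := F _ _ eqB.
rewrite tnsDr !tnsZr cmpDr !cmpZr.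
have Mw : cmp M (tns (idm B oXs) w) = idm B [:: false; true].
  have h1 := tnsA (idm B oXs) (coev_wb B) (idm B oX); rewrite castH_id in h1.
  have h2 := tnsA (ev_bw B) (idm B oXs) (idm B oX); rewrite castH_id tns_id in h2.
  rewrite /M /w -h1 -h2 -(tns_cmp (tns (ev_bw B) (idm B oXs)) (tns (idm B oXs) (coev_wb B))) cmp1l zz2 tns_id //.
have eid : tns (idm B oXs) (tns (idm B oX) (idm B [:: true; false; true])) = idm B _.
  by rewrite !tns_id.
have tA : forall A C (f : Defs.Hom B A C), tns (idm B oXs) (tns (idm B oX) f) = tns (idm B [:: false; true]) f.
  move=> A C f; have h := tnsA (idm B oXs) (idm B oX) f; rewrite castH_id tns_id in h.
  by rewrite -h.
have Mu : cmp M (tns (idm B oXs) (cmp (tns (idm B oX) D1) w)) = D1.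
  rewrite -{1}(cmp1r (idm B oXs)) tns_cmp -cmpA.
  suff -> : cmp M (tns (idm B oXs) (tns (idm B oX) D1)) = cmp D1 M by rewrite cmpA Mw cmp1r.
  rewrite tA /M -(tns_cmp (ev_bw B) (idm B [:: false;true]) (idm B [:: false;true]) D1) cmp1l cmp1r.
  have := tns_cmp (idm B [::]) (ev_bw B) D1 (idm B [:: false; true]).
  by rewrite cmp1l cmp1r tns1l => ->.
have Mv : cmp M (tns (idm B oXs) (tns (idm B oX) (coev_bw B))) = cmp (coev_bw B) (ev_bw B).
  rewrite tA /M -(tns_cmp (ev_bw B) (idm B [:: false;true]) (idm B [:: false;true]) (coev_bw B)) cmp1l cmp1r.
  have := tns_cmp (idm B [::]) (ev_bw B) (coev_bw B) (idm B [::]).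
  by rewrite cmp1l cmp1r tns1l tns1r' castH_id => ->.
by rewrite Mu Mv Mw scalerA.
Qed.
End D1.


Section Step.
Variable B : brcat.

Lemma cmp_cast A C D C' (f : Defs.Hom B C D) (g : Defs.Hom B A C) :
  C = C' -> cmp f g = cmp (castH C' D f) (castH A C' g).
Proof. by move=> e; subst; rewrite !castH_id. Qed.

Definition DD (A : ob) := cmp (brd B A oXs) (brd B oXs A).
Definition DX1 := DD oX.

Lemma step_id (Y : ob) :
  cmp (tns (idm B oXs) (brd B Y oX)) (DD (Y ++ oX))
  = cmp (tns DX1 (idm B Y)) (cmp (tns (idm B oXs) (brd B Y oX)) (tns (DD Y) (idm B oX))).
Proof.
have h1 := hex1 B Y oX oXs.
have h2 := hex2 B oXs Y oX.
have h3 := hex2 B Y oXs oX; rewrite castH_id in h3.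
have nat := brd_nat (idm B Y) DX1.
rewrite /DD (cmp_cast (brd B (Y ++ oX) oXs) (brd B oXs (Y ++ oX)) (esym (catA Y oX oXs))) h1 h2.
rewrite !cmpA -(cmpA (tns (idm B Y) _)) -tns_cmp cmp1l -cmpA -h3 -cmpA nat !cmpA h3.
rewrite cmpA -(cmp_cast (tns (brd B Y oXs) (idm B oX)) (tns (brd B oXs Y) (idm B oX)) (esym (catA Y oXs oX))).
by rewrite -tns_cmp cmp1l.
Qed.
End Step.


Lemma nseq_snoc (T : Type) k (x : T) X : nseq k x ++ x :: X = x :: nseq k x ++ X.
Proof. by elim: k => //= k ->. Qed.

Lemma T_snoc k : nseq k true ++ oX = nseq k.+1 true.
Proof. by rewrite nseq_snoc cats0. Qed.

Section Main.
Variable B : brcat.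
Variables (alpha beta kappa kappa' : CC) (m n : nat).
Hypothesis hm : (0 < m)%N.
Hypothesis hn : (0 < n)%N.
Hypothesis hab : alpha * beta != 0.
Hypothesis hrel : B_relations B alpha beta kappa kappa'.



Definition PP := nseq m.-1 false.
Definition VV (A : ob) (f : Defs.Hom B A A) : Defs.Hom B (Vmn m n) (Vmn m n) :=
  castH (Vmn m n) (Vmn m n) (tns (idm B PP) f).
Definition Sub (x : Defs.Hom B (Vmn m n) (Vmn m n)) := @in_subalg B m n (qwB_gens B m n) x.

Lemma PP_cons X : PP ++ false :: X = nseq m false ++ X.
Proof. by rewrite /PP; case: m hm => // m' _ /=; rewrite nseq_snoc. Qed.

Lemma castH_cmpE X A (f g : Defs.Hom B A A) : A = X ->
  castH X X (cmp f g) = cmp (castH X X f) (castH X X g).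
Proof. by move=> e; subst; rewrite !castH_id. Qed.

Lemma VV_cmp A (f g : Defs.Hom B A A) : PP ++ A = Vmn m n -> VV (cmp f g) = cmp (VV f) (VV g).
Proof. by move=> e; rewrite /VV -castH_cmpE // -tns_cmp cmp1l. Qed.

Lemma VV_cmp_gen O A C D (f : Defs.Hom B C D) (g : Defs.Hom B A C) :
  PP ++ O = Vmn m n -> A = O -> C = O -> D = O ->
  VV (castH O O (cmp f g)) = cmp (VV (castH O O f)) (VV (castH O O g)).
Proof. by move=> e e1 e2 e3; subst; rewrite !castH_id VV_cmp. Qed.

Lemma VV_lin A a (f g : Defs.Hom B A A) : VV (a *: f + g) = a *: VV f + VV g.
Proof. by rewrite /VV tnsDr tnsZr castHD castHZ. Qed.
Lemma VV_Z A a (f : Defs.Hom B A A) : VV (a *: f) = a *: VV f.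
Proof. by rewrite /VV tnsZr castHZ. Qed.
Lemma VV_D A (f g : Defs.Hom B A A) : VV (f + g) = VV f + VV g.
Proof. by rewrite /VV tnsDr castHD. Qed.

Lemma VV_id A : PP ++ A = Vmn m n -> VV (idm B A) = idm B (Vmn m n).
Proof. by move=> e; rewrite /VV tns_id; rewrite e castH_id. Qed.

Lemma VV_heq A A' (f : Defs.Hom B A A) (g : Defs.Hom B A' A') : heq f g -> VV f = VV g.
Proof. by move=> h; apply: heq_castH; apply: heq_tns => //; apply: heq_refl. Qed.

Lemma Sub_cmp x y : Sub x -> Sub y -> Sub (cmp x y). Proof. exact: sub_mul. Qed.

Definition LI x := exists y, Sub y /\ cmp y x = idm B (Vmn m n).

Lemma LI_cmp x y : LI x -> LI y -> LI (cmp x y).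
Proof.
move=> [x' [sx ex]] [y' [sy ey]]; exists (cmp y' x'); split; first exact: sub_mul.
by rewrite cmpA -(cmpA x') ex cmp1l.
Qed.

Lemma LI_id : LI (idm B (Vmn m n)).
Proof. by exists (idm B _); split; [exact: sub_one| rewrite cmp1l]. Qed.

Local Notation T k := (nseq k true).
Local Notation a := (- (alpha * beta)).
Local Notation s := (alpha + beta).

Lemma objE k j : (k + j = n)%N -> PP ++ false :: T k ++ T j = Vmn m n.
Proof. by move=> e; rewrite PP_cons // -nseqD e. Qed.

Definition hloc k j := tns (idm B (oXs ++ T k)) (tns (brd B oX oX) (idm B (T j))).

Lemma VV_hloc k j : (k + 2 + j = n)%N -> VV (hloc k j) = gen_h B m n k.+1.
Proof.
move=> e; rewrite /VV /gen_h /whisk; apply: heq_castH.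
apply: heq_trans; first exact/heq_sym/heq_tnsA.
rewrite tns_id; apply: heq_tns; first by apply: heq_idm; rewrite PP_cons.
apply: heq_tns; first exact: heq_refl.
by apply: heq_idm; congr nseq; lia.
Qed.

Lemma hloc_sq k j : cmp (hloc k j) (hloc k j) = a *: idm B _ + s *: hloc k j.
Proof.
case: hrel => hc _ _ _ _.
rewrite /hloc -tns_cmp cmp1l -tns_cmp cmp1l hc tnsDl !tnsZl tns_id tnsDr tnsZr tns_id.
by rewrite tnsZr.
Qed.

Lemma hloc_good k j : (k + 2 + j = n)%N -> Sub (VV (hloc k j)) /\ LI (VV (hloc k j)).
Proof.
move=> e; have gh : Sub (VV (hloc k j)).
  rewrite VV_hloc //; apply: sub_gen; right; right; exists k.+1 => //; apply/andP; split=> //; lia.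
split=> //.
have ha : a != 0 by rewrite oppr_eq0.
exists (a^-1 *: (VV (hloc k j) + (- s) *: idm B _)); split.
  by apply: sub_scale; apply: sub_add => //; apply: sub_scale; apply: sub_one.
have eO : PP ++ (oXs ++ T k) ++ ((oX ++ oX) ++ T j) = Vmn m n.
  by apply: (objE (j := j.+2)); lia.
rewrite cmpZl cmpDl cmpZl cmp1l -VV_cmp // hloc_sq VV_lin VV_Z VV_id //.
by rewrite (scaleNr s) addrK scalerA mulVf // scale1r.
Qed.


Lemma all_true_eq (L1 L2 : seq bool) : all id L1 -> all id L2 -> size L1 = size L2 -> L1 = L2.
Proof.
elim: L1 L2 => [|x L1 IH] [|y L2] //= /andP[-> h1] /andP[-> h2] [e].
by rewrite (IH L2).
Qed.

Definition Cloc k j := tns (tns (idm B oXs) (brd B (T k) oX)) (idm B (T j)).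
Definition Ob k j : ob := false :: true :: T k ++ T j.
Definition Cend k j := castH (Ob k j) (Ob k j) (Cloc k j).

Lemma allT k : all id (T k). Proof. by elim: k. Qed.

Ltac tl := apply: all_true_eq;
  [ by rewrite /= ?all_cat ?allT //= ?all_cat ?allT //= ?all_cat ?allT | by rewrite /= ?all_cat ?allT //= ?all_cat ?allT //= ?all_cat ?allT
  | rewrite /= ?size_cat ?size_nseq /= ?size_cat ?size_nseq; lia].
Ltac objc := try rewrite /Ob; rewrite /=; first [done | congr (_ :: _); tl].
Ltac objv := try rewrite /Ob; rewrite PP_cons // /Vmn; congr (_ ++ _); tl.


Lemma C_good k : forall j, (k + 1 + j = n)%N -> Sub (VV (Cend k j)) /\ LI (VV (Cend k j)).
Proof.
elim: k => [|k IH] j e.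
  rewrite /Cend /Cloc brd_nil_l !tns_id castH_id VV_id; last by objv.
  by split; [exact: sub_one | exact: LI_id].
have e' : (k + 1 + j.+1 = n)%N by lia.
have [s1 l1] := IH j.+1 e'.
have e2 : (k + 2 + j = n)%N by lia.
have [s2 l2] := hloc_good e2.
suff -> : VV (Cend k.+1 j) = cmp (VV (Cend k j.+1)) (VV (hloc k j)).
  by split; [exact: sub_mul | exact: LI_cmp].
have h1 := hex1 B (T k) oX oX.
set K := castH _ _ (tns (brd B (T k) oX) (idm B oX)) in h1.
set G := tns (tns (idm B oXs) (tns (idm B (T k)) (brd B oX oX))) (idm B (T j)).
set F := tns (tns (idm B oXs) K) (idm B (T j)).
have e1 : heq (Cloc k.+1 j) (cmp F G).
  rewrite /F /G -tns_cmp cmp1l -tns_cmp cmp1l -h1.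
  apply: heq_tns; last exact: heq_refl. apply: heq_tns; first exact: heq_refl.
  apply: (heq_trans (g := brd B (T k ++ oX) oX)); first by apply: heq_brd; rewrite ?T_snoc.
  by apply/heq_sym/castH_heq; rewrite -?catA.
rewrite /Cend (heq_castH (Ob k.+1 j) (Ob k.+1 j) e1).
rewrite VV_cmp_gen; [ | objv | objc | objc | objc ].
congr (cmp _ _); apply: VV_heq.
  apply: heq_trans; first by apply: castH_heq; objc.
  apply: (heq_trans (g := F)); first exact: heq_refl.
  apply: (heq_trans (g := Cloc k j.+1)); last by apply/heq_sym/castH_heq; objc.
  apply: (heq_trans (g := tns (tns (idm B oXs) (tns (brd B (T k) oX) (idm B oX))) (idm B (T j)))).
    apply: heq_tns; last exact: heq_refl.
    apply: heq_tns; first exact: heq_refl.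
    by apply: castH_heq; rewrite -?catA.
  apply: (heq_trans (g := tns (tns (tns (idm B oXs) (brd B (T k) oX)) (idm B oX)) (idm B (T j)))).
    apply: heq_tns; last exact: heq_refl.
    exact/heq_sym/heq_tnsA.
  apply: heq_trans; first exact: heq_tnsA.
  rewrite tns_id; exact: heq_refl.
apply: (heq_trans (g := G)); first by apply: castH_heq; objc.
rewrite /G /hloc.
apply: (heq_trans (g := tns (tns (tns (idm B oXs) (idm B (T k))) (brd B oX oX)) (idm B (T j)))).
  apply: heq_tns; last exact: heq_refl.
  exact/heq_sym/heq_tnsA.
rewrite tns_id; exact: heq_tnsA.
Qed.

Lemma tnsI_cmp A C D Z (f : Defs.Hom B C D) (g : Defs.Hom B A C) :
  tns (cmp f g) (idm B Z) = cmp (tns f (idm B Z)) (tns g (idm B Z)).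
Proof. by rewrite -tns_cmp cmp1l. Qed.

Lemma heq_DD A A' : A = A' -> heq (DD B A) (DD B A').
Proof. by move=> e; subst; exact: heq_refl. Qed.

Lemma D1_base : Sub (VV (tns (DX1 B) (idm B (T n.-1)))).
Proof.
case: hrel => hc hk _ _ _.
have h := D1_rel hc hk.
have ha : a != 0 by rewrite oppr_eq0.
have -> : DX1 B = a^-1 *: (idm B _ + (- (s * kappa)) *: cmp (coev_bw B) (ev_bw B)).
  by rewrite -h (scaleNr (s * kappa)) addrK scalerA mulVf // scale1r.
rewrite tnsZl tnsDl tnsZl tns_id VV_Z VV_D VV_Z VV_id; last by objv.
apply: sub_scale; apply: sub_add; first exact: sub_one.
apply: sub_scale; apply: sub_gen; right; left; done.
Qed.

Lemma D_good k : forall j, (k.+1 + j = n)%N -> Sub (VV (tns (DD B (T k.+1)) (idm B (T j)))).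
Proof.
elim: k => [|k IH] j e.
  have -> : j = n.-1 by lia.
  exact: D1_base.
have IHj := IH j.+1 ltac:(lia).
have [sC [y [sy ey]]] := C_good (k := k.+1) (j := j) ltac:(lia).
have st := congr1 (fun x => tns x (idm B (T j))) (step_id B (T k.+1)).
rewrite /= (tnsI_cmp _ (tns (idm B oXs) (brd B (T k.+1) oX)) (DD B (T k.+1 ++ oX))) (tnsI_cmp _ (tns (DX1 B) (idm B (T k.+1)))) (tnsI_cmp _ (tns (idm B oXs) (brd B (T k.+1) oX)) (tns (DD B (T k.+1)) (idm B oX))) in st.
have st2 := congr1 (fun x => VV (castH (Ob k.+1 j) (Ob k.+1 j) x)) st.
rewrite /= VV_cmp_gen in st2; [ | objv | objc | objc | objc ].
rewrite VV_cmp_gen in st2; [ | objv | objc | objc | objc ].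
rewrite VV_cmp_gen in st2; [ | objv | objc | objc | objc ].
set X1 := VV (castH (Ob k.+1 j) (Ob k.+1 j) (tns (tns (idm B oXs) (brd B (T k.+1) oX)) (idm B (T j)))) in st2.
set X2 := VV (castH (Ob k.+1 j) (Ob k.+1 j) (tns (DD B ((T k.+1) ++ oX)) (idm B (T j)))) in st2.
set X3 := VV (castH (Ob k.+1 j) (Ob k.+1 j) (tns (tns (DX1 B) (idm B (T k.+1))) (idm B (T j)))) in st2.
set X4 := VV (castH (Ob k.+1 j) (Ob k.+1 j) (tns (tns (DD B (T k.+1)) (idm B oX)) (idm B (T j)))) in st2.
have eX1 : X1 = VV (Cend k.+1 j) by [].
have eX2 : VV (tns (DD B (T k.+2)) (idm B (T j))) = X2.
  apply: VV_heq.
  apply: (heq_trans (g := tns (DD B ((T k.+1) ++ oX)) (idm B (T j)))).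
    apply: heq_tns; last exact: heq_refl.
    by apply: heq_DD; rewrite T_snoc.
  by apply/heq_sym/castH_heq; objc.
have sX3 : Sub X3.
  have := D1_base; rewrite /X3 (VV_heq (g := tns (DX1 B) (idm B (T n.-1)))) //.
  apply: (heq_trans (g := tns (tns (DX1 B) (idm B (T k.+1))) (idm B (T j)))).
    by apply: castH_heq; objc.
  apply: heq_trans; first exact: heq_tnsA.
  apply: heq_tns; first exact: heq_refl.
  rewrite tns_id; apply: heq_idm; tl.
have sX4 : Sub X4.
  move: IHj; rewrite /X4 (VV_heq (g := tns (DD B (T k.+1)) (idm B (T j.+1)))) //.
  apply: (heq_trans (g := tns (tns (DD B (T k.+1)) (idm B oX)) (idm B (T j)))).
    by apply: castH_heq; objc.
  apply: heq_trans; first exact: heq_tnsA.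
  rewrite tns_id; exact: heq_refl.
rewrite eX2.
have -> : X2 = cmp y (cmp X1 X2) by rewrite -cmpA eX1 ey cmp1l.
rewrite st2; apply: sub_mul => //; apply: sub_mul => //; apply: sub_mul => //.
Qed.

Lemma Jwall_good : Sub (J_wall B alpha beta m n).
Proof.
rewrite /J_wall; apply: sub_scale.
have := D_good (k := n.-1) (j := 0) ltac:(lia).
by rewrite prednK.
Qed.
End Main.


Theorem lemma2p4p1 (B : brcat) (alpha beta kappa kappa' : CC) (m n : nat) :
  (1 <= m)%N -> (1 <= n)%N ->
  alpha * beta != 0 -> kappa != 0 -> kappa' != 0 -> alpha + beta != 0 ->
  B_relations B alpha beta kappa kappa' ->
  forall j : nat, (2 <= j <= m + n)%N ->
    @in_subalg B m n (qwB_gens B m n) (J B alpha beta m n j).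
Proof.
move=> hm hn hab _ _ _ hrel j /andP[hj1 hj2].
have W := Jwall_good hm hn hab hrel.
suff H : forall j, (1 <= j <= m + n)%N -> @in_subalg B m n (qwB_gens B m n) (J B alpha beta m n j).
  by apply: H; lia.
elim=> [|k IH] /andP[h1 h2]; first by [].
case: k IH h1 h2 => [|k] IH h1 h2; first exact: sub_one.
have IHk := IH ltac:(lia).
rewrite /=; case: ifP => hkn.
  apply: sub_scale; apply: sub_mul; last apply: sub_mul => //.
    by apply: sub_gen; right; right; exists (n - k.+1)%N => //; apply/andP; split; lia.
  by apply: sub_gen; right; right; exists (n - k.+1)%N => //; apply/andP; split; lia.
case: ifP => hkn2; first exact: W.
apply: sub_scale; apply: sub_mul; last apply: sub_mul => //.
  by apply: sub_gen; left; exists (k.+1 - n)%N => //; apply/andP; split; lia.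
by apply: sub_gen; left; exists (k.+1 - n)%N => //; apply/andP; split; lia.
Qed.
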